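(* Let $p$ be an odd prime and $G$ a finite $p$-group with cyclic commutator subgroup. Write $|G'|=p^m$ and $|G'\cap \mathrm{Z}(G)|=p^t$. Then ${\rm C}_G(G')=\{g\in G: g^{p^t}\in \mathrm{Z}(G)G'\}$ and ${\rm C}_G(G')'=\mho_{m-t}(G')$. Moreover, for every subgroup $N$ of $G$ contained in ${\rm C}_G(G')$ one has $\exp(N)=p^{\min\{n : {\mathrm D}_{p^n}(N)=1\}}$.
   Context: $\mathrm{Z}(G)$ is the center; $\mho_j(X)=\langle x^{p^j}:x\in X\rangle$. The Jennings series of a finite $p$-group $N$ is ${\mathrm D}_n(N)=\prod_{ip^j\ge n}\mho_j(\gamma_i(N))$, with $\gamma_i$ the lower central series. *)

(* Defs.v *)
From HB Require Import structures.
From mathcomp Require Import all_boot all_fingroup all_solvable.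
Set Implicit Arguments. Unset Strict Implicit. Unset Printing Implicit Defensive.
Local Open Scope group_scope.

(* Jennings series of a finite p-group N:
   D_n(N) = prod_{i p^j >= n} Mho_j(gamma_i(N)).
   The product of these normal subgroups is their join.  Terms with i > n or
   j > n are redundant (they lie in gamma_n(N) = term (n,0), resp. in the
   term (i,n), since i*p^n >= n), so the index range is truncated to
   1 <= i <= n, 0 <= j <= n. *)
Definition jennings (gT : finGroupType) (p n : nat) (N : {set gT}) : {set gT} :=
  <<\bigcup_(i < n.+1 | 0 < i)
      \bigcup_(j < n.+1 | n <= i * p ^ j) 'Mho^j('L_i(N))>>.

(* Main.v *)
Require Import Defs.
From HB Require Import structures.
From mathcomp Require Import all_boot all_fingroup all_solvable.
From mathcomp Require Import zify ring.
Set Implicit Arguments. Unset Strict Implicit. Unset Printing Implicit Defensive.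

Definition geo (u n : nat) : nat := \sum_(i < n) u ^ i.

Lemma geoS u n : geo u n.+1 = (u * geo u n).+1.
Proof.
rewrite /geo big_ord_recl expn0 big_distrr /= add1n; congr _.+1.
by apply: eq_bigr => i _; rewrite /bump /= add1n expnS.
Qed.

Lemma geoSr u n : geo u n.+1 = geo u n + u ^ n.
Proof. by rewrite /geo big_ord_recr. Qed.

Lemma geo_add u a b : geo u (a + b) = geo u a + u ^ a * geo u b.
Proof.
rewrite /geo big_split_ord /= big_distrr /=; congr (_ + _).
by apply: eq_bigr => i _; rewrite expnD.
Qed.

Lemma geo_mul u a b : geo u (a * b) = geo (u ^ a) b * geo u a.
Proof.
elim: b => [|b IH]; first by rewrite muln0 /geo !big_ord0.
by rewrite mulnS geo_add IH geoS mulnA mulSn.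
Qed.

Lemma geo_base p u : prime p -> odd p -> u %% p = 1 ->
  exists2 w, coprime w p & geo u p = p * w.
Proof.
move=> pp op u1.
have p1 := prime_gt1 pp.
set l := u %/ p.
have eu : u = 1 + p * l by rewrite {1}(divn_eq u p) u1 addnC mulnC.
have A : forall i, exists A, u ^ i = 1 + i * p * l + p ^ 2 * A.
  elim=> [|i [A IH]]; first by exists 0; rewrite expn0 !mul0n muln0 !addn0.
  exists (i * l * l + A + p * A * l); rewrite expnSr IH eu; ring.
have B : forall n, exists B, geo u n = n + 'C(n, 2) * p * l + p ^ 2 * B.
  elim=> [|n [B IH]]; first by exists 0; rewrite /geo big_ord0 bin0n !mul0n muln0.
  have [An HA] := A n.
  exists (B + An); rewrite geoSr IH HA binS bin1; ring.
have [Bp HB] := B p.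
set h := p.-1./2.
have Ch : 'C(p, 2) = p * h.
  have ev : p.-1 = h.*2.
    rewrite /h -[LHS](odd_double_half (p.-1)).
    have : ~~ odd p.-1 by move: op; case: (p) p1 => // q _; rewrite /= => /negPn.
    by move/negbTE => ->.
  by rewrite bin2 ev -doubleMr doubleK.
exists (1 + p * (h * l + Bp)).
  rewrite -coprime_modl.
  have -> : (1 + p * (h * l + Bp)) %% p = 1.
    by rewrite addnC mulnC modnMDl modn_small.
  exact: coprime1n.
by rewrite HB Ch; ring.
Qed.

Lemma geo_ppow p u k : prime p -> odd p -> u %% p = 1 ->
  exists2 w, coprime w p & geo u (p ^ k) = p ^ k * w.
Proof.
move=> pp op u1; have p1 := prime_gt1 pp.
elim: k => [|k [w2 cw2 IH]].
  by exists 1; rewrite ?coprime1n // expn0 /geo big_ord1 expn0.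
have uk : (u ^ (p ^ k)) %% p = 1.
  by rewrite -modnXm u1 exp1n modn_small.
have [w1 cw1 H1] := geo_base pp op uk.
exists (w1 * w2); first by rewrite coprimeMl cw1 cw2.
by rewrite expnSr geo_mul IH H1; ring.
Qed.

Local Open Scope group_scope.

Lemma comm_abel (gT : finGroupType) (K : {group gT}) x y :
  abelian K -> x \in K -> y \in K -> commute x y.
Proof. by move=> cKK Kx Ky; apply: (centsP cKK). Qed.

Lemma conj_abel (gT : finGroupType) (K : {group gT}) x y :
  abelian K -> x \in K -> y \in K -> x ^ y = x.
Proof. by move=> cKK Kx Ky; apply/conjg_fixP/commgP; apply: comm_abel Kx Ky. Qed.

Lemma der_mem (gT : finGroupType) (G : {group gT}) x y :
  x \in G -> y \in G -> [~ x, y] \in G^`(1).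
Proof. by move=> Gx Gy; rewrite derg1 mem_commg. Qed.

Lemma der_memJ (gT : finGroupType) (G : {group gT}) x y :
  x \in G^`(1) -> y \in G -> x ^ y \in G^`(1).
Proof.
move=> Kx Gy; rewrite memJ_norm //.
by apply: subsetP Gy; case/andP: (der_normal 1 G).
Qed.

Lemma L4 (gT : finGroupType) (G : {group gT}) g a b :
  abelian G^`(1) -> g \in G -> a \in G -> b \in G ->
  [~ g, [~ a, b]] * [~ [~ g, b], a] = [~ [~ g, a], b].
Proof.
move=> cKK Gg Ga Gb.

have E : [~ g, a * b] = [~ g, b * a * [~ a, b]] by rewrite -commgC.
rewrite commgMJ [in RHS]commgMJ [X in _ = _ * X](conj_abel cKK) ?der_mem ?groupM // in E.
rewrite [X in _ = _ * X]commgMJ !conjg_mulR in E.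
set A := [~ g, a] in E *; set B := [~ g, b] in E *.
set X := [~ A, b] in E *; set Y := [~ B, a] in E *; set Z := [~ g, [~ a, b]] in E *.
have sKG := subsetP (der_sub 1 G).
have KA : A \in G^`(1) by apply: der_mem.
have KB : B \in G^`(1) by apply: der_mem.
have KX : X \in G^`(1) by apply: der_mem => //; apply: sKG.
have KY : Y \in G^`(1) by apply: der_mem => //; apply: sKG.
have KZ : Z \in G^`(1) by apply: der_mem => //; apply: sKG; apply: der_mem.
rewrite (mulgA B A X) (comm_abel cKK KB KA) (mulgA A B Y) (mulgA Z (A * B) Y) in E.
rewrite (comm_abel cKK KZ (groupM KA KB)) -(mulgA (A * B) Z Y) in E.
by apply: (mulgI (A * B)); rewrite -E.
Qed.


Lemma commX_geo (gT : finGroupType) (G : {group gT}) g a u n :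
  g \in G -> a \in G -> (forall y, y \in G^`(1) -> y ^ g = y ^+ u) ->
  [~ g ^+ n, a] = [~ g, a] ^+ geo u n.
Proof.
move=> Gg Ga Hu; elim: n => [|n IH]; first by rewrite expg0 comm1g /geo big_ord0.
rewrite expgSr commMgJ IH conjXg Hu ?der_mem // -expgM geoS expgSr.
done.
Qed.

Record setup (gT : finGroupType) p (G : {group gT}) m t (c : gT) : Prop :=
  Setup { s_pp : prime p; s_odd : odd p; s_pG : p.-group G;
          s_dK : G^`(1) = <[c]>; s_oc : #[c] = (p ^ m)%N;
          s_oZ : #|G^`(1) :&: 'Z(G)| = (p ^ t)%N }.

Lemma s_tm gT p (G : {group gT}) m t c : setup p G m t c -> t <= m.
Proof.
case=> pp _ _ dK oc oZ.
rewrite -(dvdn_Pexp2l _ _ (prime_gt1 pp)) -oZ -oc orderE -dK.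
by apply: cardSg; apply: subsetIl.
Qed.

Lemma s_Z gT p (G : {group gT}) m t c : setup p G m t c ->
  G^`(1) :&: 'Z(G) = <[c ^+ (p ^ (m - t))]>.
Proof.
move=> S; have tm := s_tm S; case: S => pp _ _ dK oc oZ.
have p0 := prime_gt0 pp.
apply/eqP; rewrite (eq_subG_cyclic (G := G^`(1))).
- rewrite oZ -orderE orderXdiv oc ?dvdn_exp2l ?leq_subr // -expnB ?leq_subr //.
  by rewrite subKn.
- by have cK : cyclic G^`(1) by rewrite dK cycle_cyclic.
- exact: subsetIl.
by have := cycleX c (p ^ (m - t)); rewrite -dK.
Qed.


Lemma Zcomm (gT : finGroupType) (G : {group gT}) z x :
  z \in 'Z(G) -> x \in G -> [~ z, x] = 1.
Proof.
move=> Zz Gx; apply/eqP/commgP.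
move: Zz; rewrite /center inE => /andP [_ /centP cz].
exact: cz.
Qed.

Lemma inZ (gT : finGroupType) (G : {group gT}) z :
  z \in G -> (forall x, x \in G -> [~ z, x] = 1) -> z \in 'Z(G).
Proof.
move=> Gz H; rewrite /center inE Gz /=; apply/centP => x Gx.
by apply/commgP/eqP; apply: H.
Qed.

Lemma s_cK gT p (G : {group gT}) m t c : setup p G m t c -> abelian G^`(1).
Proof. by case=> _ _ _ -> _ _; apply: cycle_abelian. Qed.

Lemma s_cinK gT p (G : {group gT}) m t c : setup p G m t c -> c \in G^`(1).
Proof. by case=> _ _ _ -> _ _; apply: cycle_id. Qed.

Lemma s_t0 gT p (G : {group gT}) m t c : setup p G m t c -> c != 1 -> 0 < t.
Proof.
move=> S ntc; case: (S) => pp _ pG dK oc oZ.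
have ntK : G^`(1) != 1 by rewrite dK cycle_eq1.
have := meet_center_nil (pgroup_nil pG) (der_normal 1 G) ntK.
rewrite lt0n; apply: contra => /eqP t0.
by apply/eqP; apply: card_le1_trivg; rewrite oZ t0.
Qed.

Lemma s_powZ gT p (G : {group gT}) m t c y : setup p G m t c ->
  y \in G^`(1) -> y ^+ (p ^ (m - t)) \in G^`(1) :&: 'Z(G).
Proof.
move=> S Ky; rewrite (s_Z S); move: Ky; rewrite (s_dK S) => /cycleP [i ->].
by rewrite expgAC mem_cycle.
Qed.

Lemma s_commX gT (G : {group gT}) y x n : abelian G^`(1) ->
  y \in G^`(1) -> x \in G -> [~ y, x] ^+ n = [~ y ^+ n, x].
Proof.
move=> cK Ky Gx; have Gy := subsetP (der_sub 1 G) y Ky.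
by rewrite commXg //; exact: (comm_abel cK Ky (der_mem Gy Gx)).
Qed.

Lemma s_F7 gT p (G : {group gT}) m t c y x : setup p G m t c ->
  y \in G^`(1) -> x \in G -> [~ y, x] ^+ (p ^ (m - t)) = 1.
Proof.
move=> S Ky Gx; rewrite (s_commX _ (s_cK S)) //.
apply: Zcomm Gx; have := s_powZ S Ky; rewrite inE => /andP [].
done.
Qed.

Lemma s_S5 gT p (G : {group gT}) m t c x : setup p G m t c -> x \in G ->
  exists2 u, u %% p = 1%N & forall y, y \in G^`(1) -> y ^ x = y ^+ u.
Proof.
move=> S Gx; have pp := s_pp S; have p1 := prime_gt1 pp.
have dK := s_dK S.
have [c1 | ntc] := eqVneq c 1.
  exists 1%N; first by rewrite modn_small.
  by move=> y; rewrite dK c1 cycle1 inE => /eqP ->; rewrite conj1g expg1.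
have t0 := s_t0 S ntc; have tm := s_tm S.
have Kcx : c ^ x \in <[c]> by rewrite -dK der_memJ // dK cycle_id.
case/cycleP: Kcx => u cxu.
have key : forall y, y \in G^`(1) -> y ^ x = y ^+ u.
  by move=> y; rewrite dK => /cycleP [i ->]; rewrite conjXg cxu expgAC.
exists u => //.
set z := c ^+ (p ^ m.-1).
have Zz : z \in G^`(1) :&: 'Z(G).
  rewrite (s_Z S) /z.
  have -> : m.-1 = (m - t) + t.-1 by rewrite addnC; move: t0 tm; clear; lia.
  by rewrite expnD expgM mem_cycle.
have zx : z ^ x = z.
  apply/conjg_fixP; rewrite (Zcomm _ Gx) //.
  by move: Zz; rewrite inE => /andP [].
have oz : #[z] = p.
  rewrite /z orderXdiv (s_oc S) ?dvdn_exp2l ?leq_pred // -expnB ?prime_gt0 ?leq_pred //.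
  have -> : (m - m.-1 = 1)%N by move: t0 tm; clear; lia.
  by rewrite expn1.
have : z ^+ u == z ^+ 1.
  by rewrite expg1; apply/eqP; rewrite -[RHS]zx /z conjXg cxu expgAC.
rewrite eq_expg_mod_order oz => /eqP ->; exact: modn_small.
Qed.

Lemma s_S6 gT p (G : {group gT}) m t c x k : setup p G m t c -> x \in G ->
  exists2 w, coprime w p &
    forall a, a \in G -> [~ x ^+ (p ^ k), a] = [~ x, a] ^+ (p ^ k * w).
Proof.
move=> S Gx; have [u u1 Hu] := s_S5 S Gx.
have [w cw Hw] := geo_ppow k (s_pp S) (s_odd S) u1.
by exists w => // a Ga; rewrite (@commX_geo _ _ x a u (p ^ k) Gx Ga Hu) Hw.
Qed.

Lemma s_cG gT p (G : {group gT}) m t c : setup p G m t c -> c \in G.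
Proof. by move=> S; apply: (subsetP (der_sub 1 G)); apply: s_cinK S. Qed.

Lemma s_S7 gT p (G : {group gT}) m t c a : setup p G m t c -> a \in G ->
  [~ c, a] \in <[c ^+ (p ^ t)]>.
Proof.
move=> S Ga; have tm := s_tm S; have p0 := prime_gt0 (s_pp S).
have : [~ c, a] \in <[c]> by rewrite -(s_dK S) der_mem // (s_cG S).
case/cycleP => i ei.
have := s_F7 S (s_cinK S) Ga; rewrite ei -expgM => /eqP; rewrite -order_dvdn (s_oc S).
rewrite -{1}(subnKC tm) expnD dvdn_pmul2r ?expn_gt0 ?p0 //.
by case/dvdnP => j ->; rewrite mulnC expgM mem_cycle.
Qed.

Lemma s_S8 gT p (G : {group gT}) m t c : setup p G m t c ->
  exists2 x0, x0 \in G & c ^+ (p ^ t) \in <[ [~ c, x0] ]>.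
Proof.
move=> S; have tm := s_tm S; have pp := s_pp S; have p0 := prime_gt0 pp.
have p1 := prime_gt1 pp.
have oc := s_oc S.
case r0: (m - t) => [|r].
  exists 1; first exact: group1.
  have -> : t = m by move: r0 tm; clear; lia.
  by rewrite commg1 -oc expg_order group1.
case: (boolP [exists (x | x \in G), [~ c, x] ^+ (p ^ r) != 1]).
  case/existsP => x0 /andP [Gx0 ne].
  exists x0 => //.
  set e := [~ c, x0].
  have Ke : e \in G^`(1) by rewrite der_mem // (s_cG S).
  have : #[e] %| p ^ (m - t) by rewrite order_dvdn (s_F7 S (s_cinK S) Gx0).
  rewrite r0 => /(dvdn_pfactor _ _ pp) [j jr oe].
  have jr' : j = r.+1.
    apply/eqP; rewrite eqn_leq jr /=; rewrite ltnNge; apply: contra ne => jr2.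
    by apply/eqP/eqP; rewrite -order_dvdn oe dvdn_exp2l.
  have cK : cyclic G^`(1) by rewrite (s_dK S) cycle_cyclic.
  have E : <[e]> = <[c ^+ (p ^ t)]>.
    apply/eqP; rewrite (eq_subG_cyclic (G := G^`(1))) //.
    - rewrite -!orderE oe jr' -r0 orderXdiv oc ?dvdn_exp2l // expnB //.
    - by rewrite cycle_subG.
    by rewrite cycle_subG groupX // (s_cinK S).
  by rewrite E cycle_id.
rewrite negb_exists => /forallP H.
exfalso.
set z := c ^+ (p ^ r).
have Zz : z \in G^`(1) :&: 'Z(G).
  rewrite inE groupX ?(s_cinK S) //=; apply: inZ; first by rewrite groupX // (s_cG S).
  move=> x Gx; rewrite -(s_commX _ (s_cK S)) ?(s_cinK S) //.
  by have := H x; rewrite Gx /= negbK => /eqP.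
have oz : #[z] = (p ^ t.+1)%N.
  rewrite /z orderXdiv oc; last by rewrite dvdn_exp2l //; move: r0; clear; lia.
  rewrite -expnB //; last by move: r0; clear; lia.
  by congr (expn p _); move: r0 tm; clear; lia.
have := order_dvdG Zz; rewrite (s_oZ S) oz dvdn_Pexp2l // ltnn.
done.
Qed.


Lemma P1a gT p (G : {group gT}) m t c g : setup p G m t c ->
  g \in G -> g \in 'C(G^`(1)) -> g ^+ (p ^ t) \in 'Z(G) * G^`(1).
Proof.
move=> S Gg cg.
have cK := s_cK S.
have sKG := subsetP (der_sub 1 G).
have [x0 Gx0 hx0] := s_S8 S.
case/cycleP: hx0 => j ej.
set d := [~ g, x0] ^+ j.
have Kd : d \in G^`(1) by rewrite groupX // der_mem.
have gcom : forall y, y \in G^`(1) -> commute g y by move=> y Ky; apply: (centP cg).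
have E : forall x, x \in G -> [~ d, x] = [~ g ^+ (p ^ t), x].
  move=> x Gx.
  rewrite /d -(s_commX _ cK) ?der_mem //.
  have := L4 cK Gg Gx0 Gx.
  have -> : [~ g, [~ x0, x]] = 1 by apply/eqP/commgP; apply: gcom; rewrite der_mem.
  rewrite mul1g => <-.
  have Ky : [~ g, x] \in G^`(1) by rewrite der_mem.
  rewrite (s_commX _ cK) //.
  move: (Ky); rewrite (s_dK S) => /cycleP [i ei].
  rewrite ei -expgM mulnC expgM -(s_commX _ cK) ?groupX ?(s_cinK S) //.
  rewrite -(s_commX _ cK) ?(s_cinK S) // -ej expgAC -ei.
  by rewrite commXg //; apply: gcom.
set z := g ^+ (p ^ t) * d^-1.
have Zz : z \in 'Z(G).
  have Gd : d \in G := sKG d Kd.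
  apply: inZ; first exact: (groupM (groupX _ Gg) (groupVr Gd)).
  move=> x Gx; rewrite /z commMgJ -E // (conj_abel cK) ?groupV ?der_mem //.
  by rewrite -[X in X * _](conj_abel cK (y := d^-1)) ?groupV ?der_mem // -commMgJ mulgV comm1g.
have -> : g ^+ (p ^ t) = z * d by rewrite /z mulgVK.
exact: mem_mulg.
Qed.

Lemma coprime_ord gT p (K : {group gT}) (x : gT) w : prime p -> p.-group K ->
  x \in K -> coprime w p -> coprime #[x] w.
Proof.
move=> pp pK Kx cw.
have := mem_p_elt pK Kx; rewrite /p_elt => /p_natP [j ->].
by apply: coprimeXl; rewrite coprime_sym.
Qed.

Lemma s_factor gT p (G : {group gT}) m t c w a : setup p G m t c ->
  coprime w p -> a \in G ->
  exists k, forall y, y \in G^`(1) -> [~ y, a] = (y ^+ (p ^ t * w)) ^+ k.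
Proof.
move=> S cw Ga.
have pK : p.-group G^`(1) by apply: pgroupS (der_sub 1 G) (s_pG S).
have E : <[c ^+ (p ^ t)]> = <[c ^+ (p ^ t * w)]>.
  rewrite expgM; apply/eqP; rewrite -/(generator _ _) generator_coprime.
  by apply: coprime_ord (s_pp S) pK _ cw; rewrite groupX // (s_cinK S).
have := s_S7 S Ga; rewrite E => /cycleP [k ek].
exists k => y; rewrite (s_dK S) => /cycleP [i ->].
rewrite -(s_commX _ (s_cK S)) ?(s_cinK S) // ek.
by rewrite -!expgM; congr (c ^+ _); ring.
Qed.

Lemma P1b gT p (G : {group gT}) m t c g : setup p G m t c ->
  g \in G -> g ^+ (p ^ t) \in 'Z(G) * G^`(1) -> g \in 'C(G^`(1)).
Proof.
move=> S Gg /mulsgP [z d Zz Kd egzd].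
have cK := s_cK S.
have sKG := subsetP (der_sub 1 G).
have [w cw Hw] := s_S6 t S Gg.
have Ed : forall a, a \in G -> [~ d, a] = [~ g, a] ^+ (p ^ t * w).
  move=> a Ga; rewrite -Hw // egzd commMgJ (Zcomm Zz Ga) conj1g mul1g.
  done.
have key : forall a b, a \in G -> b \in G -> [~ g, [~ a, b]] = 1.
  move=> a b Ga Gb.
  have [ka Ha] := s_factor S cw Ga.
  have [kb Hb] := s_factor S cw Gb.
  have := L4 cK Gg Ga Gb.
  rewrite (Ha [~ g, b]) ?der_mem // (Hb [~ g, a]) ?der_mem // -!Ed //.
  rewrite (Ha d) // (Hb d) // => /(canRL (mulgK _)) ->.
  by rewrite [X in _ * X^-1]expgAC mulgV.
rewrite -sub_cent1 derg1 /commutator gen_subG.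
apply/subsetP => _ /imset2P [a b Ga Gb ->].
apply/cent1P; apply: commute_sym; apply/commgP/eqP; exact: key.
Qed.


Lemma P2a gT p (G : {group gT}) m t c : setup p G m t c ->
  ('C_G(G^`(1)))^`(1) \subset G^`(1) :&: 'Z(G).
Proof.
move=> S; have cK := s_cK S.
rewrite derg1 /commutator gen_subG.
apply/subsetP => _ /imset2P [h1 h2 /setIP [Gh1 ch1] /setIP [Gh2 ch2] ->].
rewrite inE der_mem //=; apply: inZ; first by rewrite groupR.
move=> x Gx; rewrite -(L4 cK Gh1 Gh2 Gx).
have -> : [~ h1, [~ h2, x]] = 1.
  by apply/eqP/commgP; apply: (centP ch1); rewrite der_mem.
rewrite mul1g; apply/eqP/commgP; apply: commute_sym; apply: (centP ch2).
by rewrite der_mem.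
Qed.

Lemma nCG gT (G : {group gT}) : G \subset 'N('C_G(G^`(1))).
Proof.
apply: normsI; first exact: normG.
by apply: norms_cent; case/andP: (der_normal 1 G).
Qed.

Lemma P2cyc gT p (G : {group gT}) m t c : setup p G m t c ->
  cyclic (G / 'C_G(G^`(1))).
Proof.
move=> S.
have [K1 | ntK] := eqVneq (G^`(1)) 1.
  by rewrite K1 cent1T setIT trivg_quotient cyclic1.
have nKG : G \subset 'N(G^`(1)) by case/andP: (der_normal 1 G).
have pK : p.-group G^`(1) by apply: pgroupS (der_sub 1 G) (s_pG S).
have cycK : cyclic G^`(1) by rewrite (s_dK S) cycle_cyclic.
have cycA : cyclic (Aut G^`(1)).
  have := cyclic_pgroup_Aut_structure pK cycK ntK; rewrite /= (s_odd S).
  move=> [mm [_ [_ cF _ _] ]].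
  case: ifP => _; first by move=> ->.
  by case=> t0 [_ _ _ [[]]].
have := first_isog_loc (conj_aut G^`(1)) nKG.
rewrite ker_conj_aut => /isog_cyclic ->.
exact: cyclicS (Aut_conj_aut _ _) cycA.
Qed.

Lemma P2dec gT p (G : {group gT}) m t c : setup p G m t c ->
  exists2 x0, x0 \in G & forall b, b \in G ->
    exists k, exists2 h, h \in 'C_G(G^`(1)) & b = h * x0 ^+ k.
Proof.
move=> S; have /cyclicP [X eX] := P2cyc S.
have nC := nCG G.
have : X \in G / 'C_G(G^`(1)) by rewrite eX cycle_id.
case/morphimP => x0 Nx0 Gx0 eX0.
exists x0 => // b Gb.
have : coset 'C_G(G^`(1)) b \in <[X]> by rewrite -eX mem_quotient.
case/cycleP => k ek.
exists k.
have Nb : b \in 'N('C_G(G^`(1))) := subsetP nC b Gb.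
have Nxk : x0 ^+ k \in 'N('C_G(G^`(1))) by rewrite groupX.
have : coset 'C_G(G^`(1)) b = coset 'C_G(G^`(1)) (x0 ^+ k).
  by rewrite ek eX0 morphX.
move/(rcoset_kercosetP Nb Nxk)/rcosetP => [h Ch ->].
by exists h.
Qed.

Lemma P2KCG gT p (G : {group gT}) m t c : setup p G m t c ->
  G^`(1) \subset [~: 'C_G(G^`(1)), G].
Proof.
move=> S; have [x0 Gx0 dec] := P2dec S.
set C := 'C_G(G^`(1)).
have sCG : C \subset G by apply: subsetIl.
have nH : G \subset 'N([~: C, G]) by apply: normsR; [exact: nCG | exact: normG].
have memH : forall h x, h \in C -> x \in G -> [~ h, x] \in [~: C, G].
  by move=> h x Ch Gx; apply: mem_commg.
have conjH : forall y x, y \in [~: C, G] -> x \in G -> y ^ x \in [~: C, G].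
  by move=> y x Hy Gx; rewrite memJ_norm // (subsetP nH).
rewrite derg1 /commutator gen_subG.
apply/subsetP => _ /imset2P [a b Ga Gb ->].
have [i [h1 Ch1 ->]] := dec a Ga.
have [j [h2 Ch2 eb]] := dec b Gb.
rewrite commMgJ; apply: groupM; first by apply: conjH; [apply: memH | rewrite groupX].
rewrite eb commgMJ; apply: groupM.
  have : commute (x0 ^+ i) (x0 ^+ j) by apply: commuteX2.
  by move/commgP/eqP ->; apply: group1.
apply: conjH; last by rewrite groupX.
by rewrite -invg_comm groupV; apply: memH => //; rewrite groupX.
Qed.

Lemma SG (gT : finGroupType) p m (c : gT) (S : {set gT}) s0 : prime p -> #[c] = (p ^ m)%N ->
  S \subset <[c]> -> s0 \in S -> <[c]> \subset <<S>> ->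
  exists2 s, s \in S & <[c]> \subset <[s]>.
Proof.
move=> pp oc sSc Ss0 sK.
case: (boolP [exists (s | s \in S), <[c]> \subset <[s]>]).
  by case/existsP => s /andP [Ss cs]; exists s.
rewrite negb_exists => /forallP H; exfalso.
have [m0 | m_gt0] := posnP m.
  have c1 : c = 1 by apply/eqP; rewrite -order_eq1 oc m0.
  by have := H s0; rewrite Ss0 c1 cycle1 sub1G.
have sub : S \subset <[c ^+ p]>.
  apply/subsetP => s Ss; have := subsetP sSc s Ss; case/cycleP => i ei.
  have : ~~ coprime #[c] i.
    apply: contra (H s) => cop; rewrite Ss /= ei.
    have : generator <[c]> (c ^+ i) by rewrite generator_coprime.
    by rewrite /generator => /eqP ->.
  rewrite oc coprime_pexpl // prime_coprime // negbK => /dvdnP [q eq].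
  by rewrite ei eq mulnC expgM mem_cycle.
have sc : <[c]> \subset <[c ^+ p]>.
  by apply: subset_trans sK _; rewrite gen_subG.
have := cardSg sc; rewrite -!orderE orderXdiv oc; last by rewrite -{1}(expn1 p) dvdn_exp2l.
rewrite -{3}(expn1 p) -expnB ?(prime_gt0 pp) //.
by rewrite dvdn_Pexp2l; [move: m_gt0; clear; lia | exact: prime_gt1 pp].
Qed.

Lemma P2b gT p (G : {group gT}) m t c : setup p G m t c ->
  G^`(1) :&: 'Z(G) \subset ('C_G(G^`(1)))^`(1).
Proof.
move=> S; set C := 'C_G(G^`(1)).
have pp := s_pp S; have tm := s_tm S; have p0 := prime_gt0 pp.
have cK := s_cK S.
have sCG : C \subset G by apply: subsetIl.
have [s Ss cs] : exists2 s, s \in [~: C, G] & <[c]> \subset <[s]> /\ s \in commg_set C G.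
  have h1 : commg_set C G \subset <[c]>.
    apply/subsetP => _ /imset2P [h x Ch Gx ->]; rewrite -(s_dK S) der_mem //.
    exact: (subsetP sCG).
  have h2 : 1 \in commg_set C G by rewrite -(commg1 1) imset2_f.
  have h3 : <[c]> \subset <<commg_set C G>>.
    by rewrite -(s_dK S); apply: P2KCG S.
  have [s Ss cs] := SG pp (s_oc S) h1 h2 h3.
  by exists s; [rewrite mem_gen | split].
case: cs => cs /imset2P [h x Ch Gx es].
have Gh : h \in G := subsetP sCG h Ch.
set e := [~ x, h].
have Ke : e \in G^`(1) by rewrite der_mem.
have ce : <[c]> \subset <[e]> by rewrite /e -invg_comm cycleV -es.
have oe : #[e] = (p ^ m)%N.
  apply/eqP; rewrite eqn_dvd; apply/andP; split; last first.
    by rewrite -(s_oc S) !orderE; apply: cardSg.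
  by rewrite -(s_oc S) !orderE; apply: cardSg; rewrite cycle_subG; move: Ke; rewrite (s_dK S).
have [w cw Hw] := s_S6 (m - t) S Gx.
have Cxr : x ^+ (p ^ (m - t)) \in C.
  rewrite inE groupX //=; apply/centP => y Ky.
  apply/commgP/eqP; rewrite Hw ?(subsetP (der_sub 1 G)) //.
  rewrite -invg_comm expgVn expgM (s_F7 S Ky Gx) expg1n invg1.
  done.
have inC' : [~ x ^+ (p ^ (m - t)), h] \in C^`(1) by rewrite derg1 mem_commg.
rewrite Hw // -/e expgM in inC'.
have pK : p.-group G^`(1) by apply: pgroupS (der_sub 1 G) (s_pG S).
have E : <[e ^+ (p ^ (m - t)) ^+ w]> = <[e ^+ (p ^ (m - t))]>.
  apply/esym/eqP; rewrite -/(generator _ _) generator_coprime.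
  by apply: coprime_ord pp pK _ cw; rewrite groupX.
rewrite (s_Z S).
have -> : <[c ^+ (p ^ (m - t))]> = <[e ^+ (p ^ (m - t))]>.
  have cK0 : cyclic G^`(1) by rewrite (s_dK S) cycle_cyclic.
  apply/eqP; rewrite (eq_subG_cyclic cK0) ?cycle_subG ?groupX ?(s_cinK S) //.
  by rewrite -!orderE !orderXdiv ?(s_oc S) ?oe // dvdn_exp2l // leq_subr.
by rewrite -E cycle_subG.
Qed.


Lemma MhoN gT p (N : {group gT}) e j : prime p -> p.-group N ->
  exponent N = (p ^ e)%N -> ('Mho^j(N) == 1) = (e <= j).
Proof.
move=> pp pN oe; have p1 := prime_gt1 pp.
apply/idP/idP.
  move=> /eqP M1; rewrite -(dvdn_Pexp2l _ _ p1) -oe; apply/exponentP => x Nx.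
  have := Mho_p_elt j Nx (mem_p_elt pN Nx); rewrite M1.
  by move/set1P.
move=> ej; rewrite (MhoE _ pN) -subG1 gen_subG; apply/subsetP => _ /imsetP [x Nx ->].
rewrite inE; apply/eqP; move: x Nx; apply/exponentP.
by rewrite oe dvdn_exp2l.
Qed.

Lemma P3 gT p (G : {group gT}) m t c (N : {group gT}) : setup p G m t c ->
  N \subset 'C_G(G^`(1)) ->
  exists n : nat,
    [/\ jennings p (p ^ n) N = 1,
        forall k : nat, jennings p (p ^ k) N = 1 -> (n <= k)%N
      & exponent N = (p ^ n)%N].
Proof.
move=> S sNC.
have pp := s_pp S; have p1 := prime_gt1 pp.
have sNG : N \subset G by apply: subset_trans sNC (subsetIl _ _).
have pN : p.-group N := pgroupS sNG (s_pG S).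
have [e oe] : {e | exponent N = (p ^ e)%N} by apply: p_natP; rewrite pnat_exponent.
have L3 : 'L_3(N) = 1.
  rewrite lcnSn lcn2; apply/commG1P.
  have s1 : N^`(1) \subset G^`(1) :&: 'Z(G).
    apply: subset_trans (P2a S); exact: dergS.
  apply: subset_trans s1 _; apply: subset_trans (subsetIr _ _) _.
  rewrite /center; apply: subset_trans (subsetIr _ _) _.
  exact: centS.
exists e; split => //.
- apply/trivgP; rewrite /jennings gen_subG.
  apply/bigcupsP => i i0; apply/bigcupsP => j hj.
  case: (leqP e j) => [ej | je].
    apply: subset_trans (MhoS _ (lcn_sub _ _)) _.
    by rewrite subG1 (MhoN _ pp pN oe).
  have i3 : 3 <= i.
    have : p ^ j.+1 <= i * p ^ j.
      by apply: leq_trans hj; rewrite leq_exp2l.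
    rewrite expnS leq_pmul2r ?expn_gt0 ?prime_gt0 //.
    apply: leq_trans; have := s_odd S; move: p1; clear; case: p => [|[|[|q]]] //.
  have : 'L_i(N) = 1.
    by apply/trivgP; rewrite -L3; apply: lcn_sub_leq.
  by move=> ->; rewrite Mho1.
move=> k Jk.
rewrite -(MhoN k pp pN oe) -subG1 -(lcn1 N).
have i1 : 1 < (p ^ k).+1 by rewrite ltnS expn_gt0 prime_gt0.
have j1 : k < (p ^ k).+1 by rewrite ltnS ltnW // ltn_expl.
rewrite -Jk /jennings; apply: sub_gen.
apply: subset_trans (bigcup_sup (Ordinal i1) _) => /=; last by [].
apply: subset_trans (bigcup_sup (Ordinal j1) _) => /=; last by rewrite mul1n.
by [].
Qed.


Unset Implicit Arguments.

Theorem lemma4p1 (gT : finGroupType) (p : nat) (G : {group gT}) (m t : nat) :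
  prime p -> odd p -> p.-group G -> cyclic (G^`(1)) ->
  #|G^`(1)| = (p ^ m)%N -> #|G^`(1) :&: 'Z(G)| = (p ^ t)%N ->
  [/\ 'C_G(G^`(1)) = [set g in G | g ^+ (p ^ t) \in 'Z(G) * G^`(1)],
      ('C_G(G^`(1)))^`(1) = 'Mho^(m - t)(G^`(1))
    & forall N : {group gT}, N \subset 'C_G(G^`(1)) ->
        exists n : nat,
          [/\ jennings p (p ^ n) N = 1,
              forall k : nat, jennings p (p ^ k) N = 1 -> (n <= k)%N
            & exponent N = (p ^ n)%N]].
Proof.
move=> pp op pG cycK oK oZ.
have [c dK] := cyclicP cycK.
have oc : #[c] = (p ^ m)%N by rewrite orderE -dK oK.
have S : setup p G m t c := Setup pp op pG dK oc oZ.
split.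
- apply/setP => g; rewrite !inE; case Gg: (g \in G) => //=.
  by apply/idP/idP; [apply: P1a S Gg | apply: P1b S Gg].
- have pc : p.-elt c.
    exact: mem_p_elt (pgroupS (der_sub 1 G) pG) (s_cinK S).
  have EM : 'Mho^(m - t)(G^`(1)) = G^`(1) :&: 'Z(G).
    by rewrite (s_Z S) dK (Mho_p_cycle _ pc).
  rewrite EM; apply/eqP; rewrite eqEsubset (P2a S) (P2b S).
  done.
- by move=> N sNC; apply: P3 S sNC.
Qed.
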